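(* Let $N>1$ and $d>0$ be real numbers with $$d^{2}>\frac{16N^{2}}{27}\left(\left(8N^{2}-6\right)\sqrt{1-\frac{3N^{-2}}{4}}+8N^{2}-9\right).$$ Let $F(z)=(1-Nz)^{2}\left(1-\frac{d^{2}}{z^{2}-1}\right)$, $\varphi(z)=\frac{1}{d^{2}}+\frac{1-N^{-1}z}{(z^{2}-1)^{2}}$ and $I_{2}=(1,\sqrt{1+d^{2}})$. Then the equation $\varphi(z)=0$ has exactly two roots $z_{02}<z_{03}$ in $I_{2}$. Moreover, for real $A>0$, the equation $F(z)+A=0$ (i.e. the quartic equation $(1-Nz)^{2}(z^{2}-1-d^{2})+A(z^{2}-1)=0$ in the complex variable $z$) has four real roots when $-F(z_{02})<A\leq -F(z_{03})$, and has two real and two (non-real) complex roots when $A<-F(z_{02})$ and when $A>-F(z_{03})$.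
   Context: This is the (dimensionless) dispersion relation for Kelvin–Helmholtz perturbations of two thin co-flowing layers (a pure incompressible fluid and a bubbly fluid): $z=ad/(u_{20}-c)$ with $c$ the phase velocity, $d=1/(bk)$, $N=M/d$ with $M=(u_{20}-u_{10})/a$, and $A=h_0\rho_{20}/((H_0-h_0)\rho_{10})>0$. The equation $F(z)+A=0$ is regarded as the fourth-degree polynomial equation obtained by multiplying by $z^{2}-1$; roots are counted with multiplicity. *)

(* Defs.v *)
From HB Require Import structures.
From mathcomp Require Import all_boot all_order all_algebra.
From mathcomp Require Import reals.
From mathcomp Require Import complex.
Set Implicit Arguments. Unset Strict Implicit. Unset Printing Implicit Defensive.
Import Order.TTheory GRing.Theory Num.Theory.
Local Open Scope ring_scope.

Definition KH_F {R : realType} (N d z : R) : R :=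
  (1 - N * z) ^+ 2 * (1 - d ^+ 2 / (z ^+ 2 - 1)).

Definition KH_phi {R : realType} (N d z : R) : R :=
  1 / d ^+ 2 + (1 - N^-1 * z) / (z ^+ 2 - 1) ^+ 2.

Definition KH_quartic {R : realType} (N d A : R) : {poly R} :=
  (1 - N *: 'X) ^+ 2 * ('X ^+ 2 - (1 + d ^+ 2)%:P) + A *: ('X ^+ 2 - 1).

Definition KH_quarticC {R : realType} (N d A : R) : {poly R[i]} :=
  map_poly (real_complex R) (KH_quartic N d A).

Definition roots_with_mult {R : realType} (p : {poly R[i]}) (s : seq R[i]) :=
  p = lead_coef p *: \prod_(x <- s) ('X - x%:P).

Definition is_real_c {R : realType} (z : R[i]) : bool := Im z == 0.

(* Main.v *)
Require Import Defs.
From HB Require Import structures.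
From mathcomp Require Import all_boot all_order all_algebra.
From mathcomp Require Import reals.
From mathcomp Require Import complex.
From mathcomp Require Import boolp classical_sets functions topology normedtype derive.
From mathcomp Require Import ring lra.
Import Order.TTheory GRing.Theory Num.Theory.
Import numFieldNormedType.Exports.
Local Open Scope ring_scope.

Section S.
Variables (R : realType) (N d : R).
Hypotheses (hN : 1 < N) (hd : 0 < d).
Local Ltac H := move: (hN) (hd) => ? ?.

Definition pp (z : R) := N * (z^+2 - 1)^+2 - d^+2 * (z - N).
Definition Fd (z : R) := 2 * (N * z - 1) * pp z / (z^+2 - 1)^+2.
Definition Qv (A z : R) := (1 - N * z)^+2 * (z^+2 - 1 - d^+2) + A * (z^+2 - 1).

Lemma derF (x : R) : x^+2 - 1 != 0 -> is_derive x 1 (KH_F N d) (Fd x).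
Proof.
move=> hx.
pose P1 : {poly R} := (1 - N *: 'X)^+2.
pose T : {poly R} := 'X ^+ 2 - 1.
have eT z : T.[z] = z^+2 - 1 by rewrite /T !hornerE.
have eP z : P1.[z] = (1 - N * z)^+2 by rewrite /P1 !hornerE.
have hv : is_derive x 1 (fun z => (T.[z])^-1) (- (T.[x]) ^- 2 *: T^`().[x]).
  apply: DeriveDef.
    apply: derivableV; first by rewrite eT.
    exact: (@derivable_horner R T x).
  by rewrite deriveV ?eT // -derive1E -derivE.
have -> : KH_F N d = horner P1 * (cst 1 - d^+2 *: (fun z => (T.[z])^-1)).
  apply/funext => z; rewrite /KH_F /= !fctE eP eT.
  by [].
apply: trigger_derive.
rewrite /Fd /pp !eT !eP.
rewrite /P1 /T !poly.derivE !hornerE /=.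
rewrite !fctE !hornerE.
rewrite /GRing.scale /=.
field.
by [].
Qed.

Lemma sq1_neq (z : R) : 1 < z \/ z < -1 -> z^+2 - 1 != 0.
Proof. move=> h; apply/negP => /eqP; case: h => h; (H; nra). Qed.

Lemma mvtF (x y : R) : x < y -> 1 < x \/ y < -1 ->
  exists2 c, x < c < y & KH_F N d y - KH_F N d x = Fd c * (y - x).
Proof.
move=> xy hxy.
have hin c : x <= c <= y -> c^+2 - 1 != 0.
  move=> /andP[h1 h2]; apply: sq1_neq; case: hxy => h; [left|right]; (H; lra).
have hd1 : forall c, c \in `]x, y[ -> is_derive c 1 (KH_F N d) (Fd c).
  move=> c; rewrite in_itv /= => /andP[h1 h2]; apply: derF; apply: hin.
  by rewrite !ltW.
have hc : {within `[x, y], continuous (KH_F N d)}%classic.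
  apply: derivable_within_continuous => c; rewrite in_itv /= => hc.
  by case: (derF c (hin c hc)).
have [c cin ->] := MVT xy hd1 hc.
by exists c => //; move: cin; rewrite in_itv.
Qed.


Lemma N0 : N != 0. Proof. by rewrite gt_eqF // (lt_trans ltr01 hN). Qed.
Lemma d0 : d != 0. Proof. by rewrite gt_eqF. Qed.

Lemma phi_pp z : z^+2 - 1 != 0 -> KH_phi N d z = pp z / (N * d^+2 * (z^+2 - 1)^+2).
Proof.
move=> hz; rewrite /KH_phi /pp.
field. by rewrite hz N0 d0.
Qed.

Lemma Q_F A z : z^+2 - 1 != 0 -> Qv A z = (z^+2 - 1) * (KH_F N d z + A).
Proof. move=> hz; rewrite /Qv /KH_F; field; exact: hz. Qed.

Lemma Qhorner A z : (KH_quartic N d A).[z] = Qv A z.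
Proof. rewrite /KH_quartic /Qv !hornerE; ring. Qed.

Lemma Qexpand A : KH_quartic N d A =
  (N^+2)%:P * 'X^4 + (- 2 * N)%:P * 'X^3 + (1 - N^+2 * (1 + d^+2) + A)%:P * 'X^2
  + (2 * N * (1 + d^+2))%:P * 'X + (- (1 + d^+2) - A)%:P.
Proof. rewrite /KH_quartic -!mul_polyC; ring. Qed.

Lemma Qderiv (A z : R) : (z^+2 - 1) * (KH_quartic N d A)^`().[z] = 2 * z * Qv A z + 2 * (N * z - 1) * pp z.
Proof. rewrite /KH_quartic !poly.derivE !hornerE /Qv /pp. ring. Qed.

Lemma pp3 a b c : (c - b) * pp a - (c - a) * pp b + (b - a) * pp c =
  (b - a) * (c - b) * (c - a) * N * (a^+2 + b^+2 + c^+2 + a * b + b * c + c * a - 2).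
Proof. rewrite /pp; ring. Qed.

Lemma h2pos {a b c : R} : 1 < a -> 1 < b -> 1 < c -> 0 < a^+2 + b^+2 + c^+2 + a * b + b * c + c * a - 2.
Proof. move=> ha hb hc; (H; nra). Qed.

Lemma pp_three a b c : 1 < a -> 1 < b -> 1 < c -> a != b -> b != c -> a != c ->
  pp a = 0 -> pp b = 0 -> pp c = 0 -> False.
Proof.
move=> ha hb hc hab hbc hac pa pb pc.
pose qq x y := N * (x + y) * (x^+2 + y^+2) - 2 * N * (x + y) - d^+2.
have e x y : pp y - pp x = (y - x) * qq x y by rewrite /pp /qq; ring.
have q1 : qq a b = 0.
  have := e a b; rewrite pa pb subrr => /esym /eqP; rewrite mulf_eq0 subr_eq0 eq_sym (negbTE hab) /=.
  by move/eqP.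
have q2 : qq b c = 0.
  have := e b c; rewrite pb pc subrr => /esym /eqP; rewrite mulf_eq0 subr_eq0 eq_sym (negbTE hbc) /=.
  by move/eqP.
have e2 : qq b c - qq a b = (c - a) * N * (a^+2 + b^+2 + c^+2 + a * b + b * c + c * a - 2).
  by rewrite /qq; ring.
move: e2; rewrite q1 q2 subrr => /esym /eqP.
rewrite !mulf_eq0 subr_eq0 eq_sym (negbTE hac) (negbTE N0) /=.
by rewrite gt_eqF // h2pos.
Qed.

Section Roots.
Variables z02 z03 : R.
Hypotheses (h1 : 1 < z02) (h12 : z02 < z03) (p2 : pp z02 = 0) (p3 : pp z03 = 0).
Local Ltac H2 := move: (hN) (hd) (h1) (h12) => ? ? ? ?.

Lemma pp_pos1 x : 1 < x -> x < z02 -> 0 < pp x.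
Proof.
move=> hx1 hx2; have := pp3 x z02 z03; rewrite p2 p3 !mulr0 subr0 addr0 => e.
have hh := h2pos hx1 h1 (lt_trans h1 h12).
have hR : 0 < (z02 - x) * (z03 - z02) * (z03 - x) * N * (x ^+ 2 + z02 ^+ 2 + z03 ^+ 2 + x * z02 + z02 * z03 + z03 * x - 2).
  rewrite !mulr_gt0 // ?subr_gt0 //; (H2; lra).
have : 0 < (z03 - z02) * pp x by rewrite e.
by rewrite pmulr_rgt0 // subr_gt0.
Qed.

Lemma pp_neg2 x : z02 < x -> x < z03 -> pp x < 0.
Proof.
move=> hx1 hx2; have := pp3 z02 x z03; rewrite p2 p3 !mulr0 add0r addr0 => e.
have hh := h2pos h1 (lt_trans h1 hx1) (lt_trans h1 h12).
have hR : 0 < (x - z02) * (z03 - x) * (z03 - z02) * N * (z02 ^+ 2 + x ^+ 2 + z03 ^+ 2 + z02 * x + x * z03 + z03 * z02 - 2).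
  rewrite !mulr_gt0 // ?subr_gt0 //; (H2; lra).
have : 0 < - ((z03 - z02) * pp x) by rewrite e.
by rewrite oppr_gt0 pmulr_rlt0 // subr_gt0.
Qed.

Lemma pp_pos3 x : z03 < x -> 0 < pp x.
Proof.
move=> hx; have := pp3 z02 z03 x; rewrite p2 p3 !mulr0 subr0 add0r => e.
have hh := h2pos h1 (lt_trans h1 h12) (lt_trans (lt_trans h1 h12) hx).
have hR : 0 < (z03 - z02) * (x - z03) * (x - z02) * N * (z02 ^+ 2 + z03 ^+ 2 + x ^+ 2 + z02 * z03 + z03 * x + x * z02 - 2).
  rewrite !mulr_gt0 // ?subr_gt0 //; (H2; lra).
have : 0 < (z03 - z02) * pp x by rewrite e.
by rewrite pmulr_rgt0 // subr_gt0.
Qed.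

Lemma Fd_pos c : 1 < c -> 0 < pp c -> 0 < Fd c.
Proof.
move=> hc hp; rewrite /Fd; apply: divr_gt0; last by apply: exprn_gt0; (H2; nra).
rewrite !mulr_gt0 //; (H2; nra).
Qed.

Lemma Fd_neg c : 1 < c -> pp c < 0 -> Fd c < 0.
Proof.
move=> hc hp; rewrite /Fd; rewrite pmulr_llt0; last by rewrite invr_gt0; apply: exprn_gt0; (H2; nra).
have h : 0 < 2 * (N * c - 1) by (H2; nra).
by rewrite pmulr_rlt0.
Qed.

Lemma M2 x y : 1 < x -> x < y -> y <= z02 -> KH_F N d x < KH_F N d y.
Proof.
move=> hx xy yz; have [c /andP[c1 c2] e] := mvtF x y xy (or_introl hx).
rewrite -subr_gt0 e mulr_gt0 ?subr_gt0 //; apply: Fd_pos; first (H2; lra).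
apply: pp_pos1; (H2; lra).
Qed.

Lemma M3 x y : z02 <= x -> x < y -> y <= z03 -> KH_F N d y < KH_F N d x.
Proof.
move=> hx xy yz; have [c /andP[c1 c2] e] := mvtF x y xy (or_introl (lt_le_trans h1 hx)).
rewrite -subr_lt0 e pmulr_llt0 ?subr_gt0 //; apply: Fd_neg; first (H2; lra).
apply: pp_neg2; (H2; lra).
Qed.

Lemma M4 x y : z03 <= x -> x < y -> KH_F N d x < KH_F N d y.
Proof.
move=> hx xy; have [c /andP[c1 c2] e] := mvtF x y xy (or_introl (lt_le_trans (lt_trans h1 h12) hx)).
rewrite -subr_gt0 e mulr_gt0 ?subr_gt0 //; apply: Fd_pos; first (H2; lra).
apply: pp_pos3; (H2; lra).
Qed.

End Roots.


Lemma M1 x y : x < y -> y < -1 -> KH_F N d y < KH_F N d x.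
Proof.
move=> xy hy; have [c /andP[c1 c2] e] := mvtF x y xy (or_intror hy).
rewrite -subr_lt0 e pmulr_llt0 ?subr_gt0 //.
have hp : 0 < pp c.
  have q1 : 0 < d^+2 * (N - c) by rewrite mulr_gt0 ?exprn_gt0 // subr_gt0; (H; lra).
  have q2 : 0 <= N * (c^+2 - 1)^+2 by rewrite mulr_ge0 ?sqr_ge0 //; (H; lra).
  rewrite /pp; (H; lra).
rewrite /Fd pmulr_llt0; last by rewrite invr_gt0; apply: exprn_gt0; (H; nra).
rewrite pmulr_llt0 //; (H; nra).
Qed.

Lemma ivt_poly (P : {poly R}) a b : a <= b ->
  (P.[a] <= 0 <= P.[b]) || (P.[b] <= 0 <= P.[a]) -> exists2 c, a <= c <= b & P.[c] = 0.
Proof.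
move=> hab h.
have hc : {within `[a, b], continuous (horner P)}%classic by apply: continuous_subspaceT; exact: continuous_horner.
have [|c cin hc0] := @IVT R (horner P) a b 0 hab hc.
  apply/andP; split; rewrite ?ge_min ?le_max; case/orP: h => /andP[q1 q2]; rewrite ?q1 ?q2 ?orbT //.
by exists c => //; move: cin; rewrite in_itv.
Qed.

Lemma factor_quartic (c4 c3 c2 c1 c0 r1 r2 : R) :
  r1 != r2 ->
  c4 * r1^+4 + c3 * r1^+3 + c2 * r1^+2 + c1 * r1 + c0 = 0 ->
  c4 * r2^+4 + c3 * r2^+3 + c2 * r2^+2 + c1 * r2 + c0 = 0 ->
  c4%:P * 'X^4 + c3%:P * 'X^3 + c2%:P * 'X^2 + c1%:P * 'X + c0%:P =
  ('X - r1%:P) * ('X - r2%:P) * (c4%:P * 'X^2 + (c3 + c4 * (r1 + r2))%:P * 'X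
     + (c2 + (r1 + r2) * (c3 + c4 * (r1 + r2)) - c4 * (r1 * r2))%:P).
Proof.
move=> hr e1 e2.
pose B := c3 + c4 * (r1 + r2).
pose C := c2 + (r1 + r2) * B - c4 * (r1 * r2).
pose al := c1 + (r1 + r2) * C - r1 * r2 * B.
pose be := c0 - r1 * r2 * C.
have ev r : c4 * r^+4 + c3 * r^+3 + c2 * r^+2 + c1 * r + c0 =
   (r - r1) * (r - r2) * (c4 * r^+2 + B * r + C) + al * r + be.
  by rewrite /al /be /C /B; ring.
have a1 : al * r1 + be = 0 by move: e1; rewrite ev subrr !mul0r add0r.
have a2 : al * r2 + be = 0 by move: e2; rewrite ev subrr mulr0 mul0r add0r.
have hal : al = 0.
  have : al * (r1 - r2) = 0 by rewrite mulrBr; (H; lra).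
  move/eqP; rewrite mulf_eq0 => /orP[/eqP //|]. by rewrite subr_eq0 (negbTE hr).
have hbe : be = 0 by move: a1; rewrite hal mul0r add0r.
have E : c4%:P * 'X^4 + c3%:P * 'X^3 + c2%:P * 'X^2 + c1%:P * 'X + c0%:P =
  ('X - r1%:P) * ('X - r2%:P) * (c4%:P * 'X^2 + B%:P * 'X + C%:P) + al%:P * 'X + be%:P.
  by rewrite /al /be /C /B; ring.
by rewrite E hal hbe polyC0 mul0r !addr0.
Qed.

Lemma quad_real {a B C x : R} : a != 0 -> a * x^+2 + B * x + C = 0 ->
  exists y, a%:P * 'X^2 + B%:P * 'X + C%:P = a%:P * (('X - x%:P) * ('X - y%:P)).
Proof.
move=> ha hx.
pose y := - B / a - x.
have hB : B = - (a * (x + y)) by rewrite /y; field.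
have hC : C = a * (x * y).
  have -> : C = - (a * x^+2 + B * x) by (H; lra).
  by rewrite /y; field.
exists y; clearbody y; rewrite hB hC; ring.
Qed.

Lemma quad_cplx (a B C : R) : 0 < a -> (forall x, a * x^+2 + B * x + C != 0) ->
  exists u v, 0 < v /\
  a%:P * 'X^2 + B%:P * 'X + C%:P = a%:P * ('X^2 - (2 * u)%:P * 'X + (u^+2 + v^+2)%:P).
Proof.
move=> ha hno.
have a0 : a != 0 by rewrite gt_eqF.
have hD : B^+2 - 4 * a * C < 0.
  rewrite ltNge; apply/negP => hD.
  have := hno ((- B + Num.sqrt (B^+2 - 4 * a * C)) / (2 * a)).
  have hs := sqr_sqrtr hD.
  set S := Num.sqrt _ in hs *.
  have -> : a * ((- B + S) / (2 * a))^+2 + B * ((- B + S) / (2 * a)) + C =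
    (S^+2 - (B^+2 - 4 * a * C)) / (4 * a) by field.
  by rewrite hs subrr mul0r eqxx.
pose u := - B / (2 * a).
pose v := Num.sqrt (4 * a * C - B^+2) / (2 * a).
have hpos : 0 < 4 * a * C - B^+2 by lra.
have vpos : 0 < v by rewrite /v divr_gt0 ?sqrtr_gt0 //; lra.
have hv2 : v^+2 = (4 * a * C - B^+2) / (4 * a^+2).
  by rewrite /v expr_div_n sqr_sqrtr; [field | lra].
have hB : B = - (a * (2 * u)) by rewrite /u; field.
have hC : C = a * (u^+2 + v^+2) by rewrite hv2 /u; field.
exists u, v; split => //.
clearbody u v; rewrite hC hB; ring.
Qed.

Lemma cfactor (u v : R) :
  ('X^2 - ((2 * u)%:C%C)%:P * 'X + ((u^+2 + v^+2)%:C%C)%:P : {poly R[i]}) =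
  ('X - ((u +i* v)%C)%:P) * ('X - ((u +i* (- v))%C)%:P).
Proof.
have e1 : ((u +i* v)%C + (u +i* (- v))%C : R[i]) = (2 * u)%:C%C.
  by apply/eqP; rewrite eq_complex /=; apply/andP; split; apply/eqP; ring.
have e2 : ((u +i* v)%C * (u +i* (- v))%C : R[i]) = (u^+2 + v^+2)%:C%C.
  by apply/eqP; rewrite eq_complex /=; apply/andP; split; apply/eqP; ring.
rewrite -e1 -e2; ring.
Qed.


Lemma isr (z : R[i]) : is_real_c z = (z \is Num.real).
Proof. by apply/idP/idP => [/eqP/Creal_ImP | /Creal_ImP/eqP]. Qed.

Lemma isr_real (x : R) : is_real_c ((x%:C)%C).
Proof. by rewrite isr -complexr0 complex_real. Qed.

Lemma isr_c (u v : R) : is_real_c ((u +i* v)%C) = (v == 0).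
Proof. by rewrite isr complex_real. Qed.

Lemma rwm (p : {poly R[i]}) (c : R[i]) (sq : seq R[i]) :
  p = c *: \prod_(z <- sq) ('X - z%:P) -> roots_with_mult p sq.
Proof.
move=> ->; rewrite /roots_with_mult lead_coefZ.
have -> : lead_coef (\prod_(z <- sq) ('X - z%:P)) = 1 by apply/monicP/monic_prod_XsubC.
by rewrite mulr1.
Qed.

Lemma map4 (c a b e f : R) :
  map_poly (real_complex R) (c%:P * (('X - a%:P) * ('X - b%:P) * (('X - e%:P) * ('X - f%:P)))) =
  (c%:C)%C *: \prod_(z <- [:: a%:C; b%:C; e%:C; f%:C]%C) ('X - z%:P).
Proof.
rewrite !big_cons big_nil mulr1 mul_polyC map_polyZ !rmorphM /= !map_polyXsubC.
by rewrite !mulrA.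
Qed.

Lemma map2c (c a b u v : R) :
  map_poly (real_complex R) (c%:P * (('X - a%:P) * ('X - b%:P) *
     ('X^2 - (2 * u)%:P * 'X + (u^+2 + v^+2)%:P))) =
  (c%:C)%C *: \prod_(z <- [:: a%:C; b%:C; (u +i* v); (u +i* (- v))]%C) ('X - z%:P).
Proof.
rewrite !big_cons big_nil mulr1 mul_polyC map_polyZ; congr (_ *: _).
rewrite mulrA -cfactor.
rewrite !(rmorphM, rmorphD, rmorphB, rmorphN) /= ?map_polyX ?map_polyC /=.

ring.
Qed.


Lemma pp_left c : c < -1 -> 0 < pp c.
Proof.
move=> hc.
have q1 : 0 < d^+2 * (N - c) by rewrite mulr_gt0 ?exprn_gt0 // subr_gt0; (H; lra).
have q2 : 0 <= N * (c^+2 - 1)^+2 by rewrite mulr_ge0 ?sqr_ge0 //; (H; lra).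
rewrite /pp; (H; lra).
Qed.

Lemma Qv_coef (A z : R) : Qv A z = N^+2 * z^+4 + (- 2 * N) * z^+3 + (1 - N^+2 * (1 + d^+2) + A) * z^+2
  + (2 * N * (1 + d^+2)) * z + (- (1 + d^+2) - A).
Proof. rewrite /Qv; ring. Qed.

Lemma Qv_in (A x : R) : 0 < A -> x^+2 <= 1 -> Qv A x < 0.
Proof.
move=> hA hx.
have q1 : (1 - N * x)^+2 * (x^+2 - 1 - d^+2) <= 0.
  rewrite mulr_ge0_le0 ?sqr_ge0 //.
  have : 0 < d^+2 by rewrite exprn_gt0.
  lra.
have [e|ne] := eqVneq (x^+2) 1.
  rewrite /Qv e subrr mulr0 addr0.
  have : (1 - N * x)^+2 != 0.
    rewrite expf_eq0 /= subr_eq0; apply/eqP => h.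
    have : (N * x)^+2 = 1 by rewrite -h expr1n.
    rewrite exprMn e mulr1 => hN1; move: hN1; have := hN; nra.
  have : 0 < d^+2 by rewrite exprn_gt0.
  move=> hd2 hne.
  rewrite pmulr_rlt0 ?lt_def ?hne ?sqr_ge0 //; lra.
have q2 : A * (x^+2 - 1) < 0 by rewrite pmulr_rlt0 // subr_lt0 lt_def eq_sym ne hx.
rewrite /Qv; lra.
Qed.


Lemma sq_gt1 (x : R) : 1 < x -> 0 < x^+2 - 1.
Proof. move=> h; nra. Qed.

Lemma factor_Q (A r1 r2 : R) : r1 != r2 -> Qv A r1 = 0 -> Qv A r2 = 0 ->
  exists B C, KH_quartic N d A = ('X - r1%:P) * ('X - r2%:P) * ((N^+2)%:P * 'X^2 + B%:P * 'X + C%:P).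
Proof.
move=> hne q1 q2; do 2 eexists; rewrite Qexpand; apply: factor_quartic => //; by rewrite -Qv_coef.
Qed.

Lemma evalQ (A r1 r2 B C x : R) :
  KH_quartic N d A = ('X - r1%:P) * ('X - r2%:P) * ((N^+2)%:P * 'X^2 + B%:P * 'X + C%:P) ->
  Qv A x = (x - r1) * (x - r2) * (N^+2 * x^+2 + B * x + C).
Proof. by move=> hQ; rewrite -Qhorner hQ !hornerE. Qed.

Lemma derQ1 (A r1 r2 B C : R) :
  KH_quartic N d A = ('X - r1%:P) * ('X - r2%:P) * ((N^+2)%:P * 'X^2 + B%:P * 'X + C%:P) ->
  (KH_quartic N d A)^`().[r1] = (r1 - r2) * (N^+2 * r1^+2 + B * r1 + C).
Proof. move=> hQ; rewrite hQ !poly.derivE !hornerE /=; ring. Qed.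

Lemma derQ2 (A r1 r2 B C : R) :
  KH_quartic N d A = ('X - r1%:P) * ('X - r2%:P) * ((N^+2)%:P * 'X^2 + B%:P * 'X + C%:P) ->
  (KH_quartic N d A)^`().[r2] = (r2 - r1) * (N^+2 * r2^+2 + B * r2 + C).
Proof. move=> hQ; rewrite hQ !poly.derivE !hornerE /=; ring. Qed.

Lemma Q1 (A : R) : Qv A 1 < 0.
Proof.
have -> : Qv A 1 = - ((N - 1)^+2 * d^+2) by rewrite /Qv; ring.
rewrite oppr_lt0 mulr_gt0 ?exprn_gt0 //; (H; lra).
Qed.

Lemma Qm1 (A : R) : Qv A (-1) < 0.
Proof.
have -> : Qv A (-1) = - ((N + 1)^+2 * d^+2) by rewrite /Qv; ring.
rewrite oppr_lt0 mulr_gt0 ?exprn_gt0 //; (H; lra).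
Qed.

Lemma sfacts : (Num.sqrt (1 + d^+2))^+2 = 1 + d^+2 /\ 1 < Num.sqrt (1 + d^+2).
Proof.
have hs2 : (Num.sqrt (1 + d^+2))^+2 = 1 + d^+2 by rewrite sqr_sqrtr // addr_ge0 // sqr_ge0.
split => //.
have s0 : 0 <= Num.sqrt (1 + d^+2) by apply: sqrtr_ge0.
have dd : 0 < d^+2 by rewrite exprn_gt0.
move: hs2 s0 dd; set s := Num.sqrt _ => hs2 s0 dd; nra.
Qed.

Lemma Qsq (A : R) : Qv A (Num.sqrt (1 + d^+2)) = A * d^+2.
Proof. by rewrite /Qv (proj1 sfacts); ring. Qed.

Lemma Qmsq (A : R) : Qv A (- Num.sqrt (1 + d^+2)) = A * d^+2.
Proof. by rewrite /Qv sqrrN (proj1 sfacts); ring. Qed.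

Lemma root_left (A : R) : 0 < A -> exists2 r1, r1 < -1 & Qv A r1 = 0.
Proof.
move=> A0.
have [_ s1] := sfacts.
have Qsp : 0 < A * d^+2 by rewrite mulr_gt0 ?exprn_gt0.
pose Q := KH_quartic N d A.
have hQe z : Q.[z] = Qv A z by rewrite /Q Qhorner.
set s := Num.sqrt _ in s1.
have hdis3 : (Q.[-s] <= 0 <= Q.[-1]) || (Q.[-1] <= 0 <= Q.[-s]).
  by rewrite !hQe Qmsq; apply/orP; right; rewrite ltW ?Qm1 // ltW.
have hle : - s <= -1 by rewrite lerN2 ltW.
have [r1 /andP[c1 c2] hr1] := ivt_poly Q (-s) (-1) hle hdis3.
rewrite hQe in hr1; exists r1 => //.
rewrite lt_neqAle c2 andbT; apply/eqP => e; have := Qm1 A; rewrite -e hr1 ltxx.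
by [].
Qed.

Lemma F0 (A x : R) : 1 < x \/ x < -1 -> Qv A x = 0 -> KH_F N d x = - A.
Proof.
move=> hx; rewrite Q_F ?sq1_neq // => /eqP; rewrite mulf_eq0 (negbTE (sq1_neq _ hx)) /=.
by rewrite addr_eq0 => /eqP.
Qed.

Section Roots2.
Variables z02 z03 : R.
Hypotheses (h1 : 1 < z02) (h12 : z02 < z03) (p2 : pp z02 = 0) (p3 : pp z03 = 0).

Lemma case1 (A : R) : 0 < A -> (- KH_F N d z02 < A /\ A <= - KH_F N d z03) ->
             exists s : seq R[i], [/\ size s = 4%N,
               roots_with_mult (KH_quarticC N d A) s & all is_real_c s].
Proof.
move=> A0 [hA1 hA2].
have z021 := h1; have z0203 := h12.
have z031 : 1 < z03 by lra.
have sq2 := sq1_neq _ (or_introl z021).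
have sq3 := sq1_neq _ (or_introl z031).
have [r1 r1m hr1] := root_left A A0.
pose Q := KH_quartic N d A.
have hQe z : Q.[z] = Qv A z by rewrite /Q Qhorner.
have Qz02 : 0 < Qv A z02.
  rewrite Q_F // mulr_gt0 ?sq_gt1 //; lra.
have Qz03 : Qv A z03 <= 0.
  rewrite Q_F //; apply: mulr_ge0_le0; [exact: ltW (sq_gt1 _ z031) | lra].
have hdis4 : (Q.[1] <= 0 <= Q.[z02]) || (Q.[z02] <= 0 <= Q.[1]).
  by rewrite !hQe; apply/orP; left; rewrite ltW ?Q1 // ltW.
have [r2 /andP[c3 c4] hr2] := ivt_poly Q 1 z02 (ltW z021) hdis4.
rewrite hQe in hr2.
have r21 : 1 < r2.
  rewrite lt_neqAle c3 andbT; apply/eqP => e; have := Q1 A; rewrite e hr2 ltxx.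
  by [].
have r2z : r2 < z02.
  rewrite lt_neqAle c4 andbT; apply/eqP => e; move: Qz02; rewrite -e hr2 ltxx.
  by [].
have hdis5 : (Q.[z02] <= 0 <= Q.[z03]) || (Q.[z03] <= 0 <= Q.[z02]).
  by rewrite !hQe; apply/orP; right; rewrite Qz03 ltW.
have [x /andP[c5 c6] hx] := ivt_poly Q z02 z03 (ltW z0203) hdis5.
rewrite hQe in hx.
have xz : z02 < x.
  rewrite lt_neqAle c5 andbT; apply/eqP => e; move: Qz02; rewrite e hx ltxx.
  by [].
have ne12 : r1 != r2 by rewrite lt_eqF //; lra.
have [B [C hQ]] := factor_Q A r1 r2 ne12 hr1 hr2.
have qx : N^+2 * x^+2 + B * x + C = 0.
  move: hx; rewrite (@evalQ A r1 r2 B C x hQ) => /eqP; rewrite !mulf_eq0 !subr_eq0.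
  rewrite (gt_eqF (_ : r1 < x)); last lra.
  rewrite (gt_eqF (_ : r2 < x)); last lra.
  by move/eqP.
have N20 : N^+2 != 0 by rewrite expf_neq0 // N0.
have [y hy] := quad_real N20 qx.
exists [:: r1%:C; r2%:C; x%:C; y%:C]%C; split => //.
apply: (rwm _ ((N^+2)%:C)%C); rewrite -map4 /KH_quarticC; congr (map_poly _ _).
  by rewrite hQ hy; ring.
by rewrite /= !isr_real.
Qed.

Lemma case2 (A : R) : 0 < A -> (A < - KH_F N d z02 \/ - KH_F N d z03 < A) ->
             exists s : seq R[i], [/\ size s = 4%N,
               roots_with_mult (KH_quarticC N d A) s &
               count is_real_c s = 2%N].
Proof.
move=> A0 hA.
have N1 := hN; have dpos := hd.
have z021 := h1; have z0203 := h12.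
have z031 : 1 < z03 by lra.
have M2' := @M2 _ _ h1 h12 p2 p3.
have M3' := @M3 _ _ h1 h12 p2 p3.
have M4' := @M4 _ _ h1 h12 p2 p3.
have [hs2 s1] := sfacts.
have [r1 r1m hr1] := root_left A A0.
pose Q := KH_quartic N d A.
have hQe z : Q.[z] = Qv A z by rewrite /Q Qhorner.
have Qsp : 0 < A * d^+2 by rewrite mulr_gt0 ?exprn_gt0.
have hdis6 : (Q.[1] <= 0 <= Q.[Num.sqrt (1 + d^+2)]) || (Q.[Num.sqrt (1 + d^+2)] <= 0 <= Q.[1]).
  by rewrite !hQe Qsq; apply/orP; left; rewrite ltW ?Q1 // ltW.
have [r2 /andP[c3 c4] hr2] := ivt_poly Q 1 (Num.sqrt (1 + d^+2)) (ltW s1) hdis6.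
rewrite hQe in hr2.
have r21 : 1 < r2.
  rewrite lt_neqAle c3 andbT; apply/eqP => e; have := Q1 A; rewrite e hr2 ltxx.
  by [].
have Fr x : 1 < x -> Qv A x = 0 -> KH_F N d x = - A by move=> hx; exact: F0 A x (or_introl hx).
have key : (forall x, 1 < x -> Qv A x = 0 -> x = r2) /\ 0 < pp r2.
  case: hA => hA.
    have loc x : 1 < x -> Qv A x = 0 -> z03 < x.
      move=> x1 hx; have Fx := Fr x x1 hx.
      rewrite ltNge; apply/negP => hxz.
      case: (ltrP x z02) => hx2.
        by have := M2' x z02 x1 hx2 (lexx _); lra.
      case: (eqVneq x z02) => [e|ne].
        by rewrite e in Fx; lra.
      have hx2' : z02 < x by rewrite lt_neqAle eq_sym ne hx2.
      by have := M3' z02 x (lexx _) hx2' hxz; lra.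
    split; last exact: (@pp_pos3 _ _ h1 h12 p2 p3 r2 (loc r2 r21 hr2)).
    move=> x x1 hx; have l1 := loc x x1 hx; have l2 := loc r2 r21 hr2.
    have e : KH_F N d x = KH_F N d r2 by rewrite (Fr x x1 hx) (Fr r2 r21 hr2).
    case: (ltgtP x r2) => // hxr.
      by have := M4' x r2 (ltW l1) hxr; lra.
    by have := M4' r2 x (ltW l2) hxr; lra.
  have loc x : 1 < x -> Qv A x = 0 -> x < z02.
    move=> x1 hx; have Fx := Fr x x1 hx.
    rewrite ltNge; apply/negP => hxz.
    case: (ltrP z03 x) => hx3.
      by have := M4' z03 x (lexx _) hx3; lra.
    case: (eqVneq x z03) => [e|ne].
      by rewrite e in Fx; lra.
    have hx3' : x < z03 by rewrite lt_neqAle ne hx3.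
    by have := M3' x z03 hxz hx3' (lexx _); lra.
  split; last exact: (@pp_pos1 _ _ h1 h12 p2 p3 r2 r21 (loc r2 r21 hr2)).
  move=> x x1 hx; have l1 := loc x x1 hx; have l2 := loc r2 r21 hr2.
  have e : KH_F N d x = KH_F N d r2 by rewrite (Fr x x1 hx) (Fr r2 r21 hr2).
  case: (ltgtP x r2) => // hxr.
    by have := M2' x r2 x1 hxr (ltW l2); lra.
  by have := M2' r2 x r21 hxr (ltW l1); lra.
have [uniq2 ppr2] := key.
have uniq1 x : x < -1 -> Qv A x = 0 -> x = r1.
  move=> xm hx; have Fx := F0 A x (or_intror xm); have F1 := F0 A r1 (or_intror r1m).
  case: (ltgtP x r1) => // hxr.
    by have := M1 x r1 hxr r1m; lra.
  by have := M1 r1 x hxr xm; lra.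
have roots x : Qv A x = 0 -> x = r1 \/ x = r2.
  move=> hx; case: (ltrP 1 x) => hx1; first by right; exact: uniq2.
  case: (ltrP x (-1)) => hx2; first by left; exact: uniq1.
  exfalso; have hxx : x^+2 <= 1 by nra.
  by have := Qv_in A x A0 hxx; rewrite hx ltxx.
have ne12 : r1 != r2 by rewrite lt_eqF //; lra.
have [B [C hQ]] := factor_Q A r1 r2 ne12 hr1 hr2.
have hno x : N^+2 * x^+2 + B * x + C != 0.
  apply/negP => /eqP hq.
  have hx : Qv A x = 0 by rewrite (@evalQ A r1 r2 B C x hQ) hq mulr0.
  case: (roots x hx) => e; rewrite e in hq.
    have d1 := @derQ1 A r1 r2 B C hQ; rewrite hq mulr0 in d1.
    have := Qderiv A r1; rewrite d1 hr1 !mulr0 add0r => h.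
    have hneg : 2 * (N * r1 - 1) * pp r1 < 0.
      by rewrite pmulr_llt0 ?pp_left //; nra.
    lra.
  have d2 := @derQ2 A r1 r2 B C hQ; rewrite hq mulr0 in d2.
  have := Qderiv A r2; rewrite d2 hr2 !mulr0 add0r => h.
  have hpos : 0 < 2 * (N * r2 - 1) * pp r2.
    by rewrite pmulr_lgt0 //; nra.
  lra.
have N2p : 0 < N^+2 by rewrite exprn_gt0 //; lra.
have [u [v [vpos hqc]]] := @quad_cplx (N^+2) B C N2p hno.
exists [:: r1%:C; r2%:C; (u +i* v); (u +i* (- v))]%C; split => //.
  apply: (rwm _ ((N^+2)%:C)%C); rewrite -map2c /KH_quarticC; congr (map_poly _ _).
  by rewrite hQ hqc; ring.
by rewrite /= !isr_real !isr_c (gt_eqF vpos) oppr_eq0 (gt_eqF vpos).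
Qed.

End Roots2.

Lemma main :
  d ^+ 2 > (16 * N ^+ 2 / 27) *
           ((8 * N ^+ 2 - 6) * Num.sqrt (1 - 3 * N ^- 2 / 4) + 8 * N ^+ 2 - 9) ->
  exists z02 z03 : R,
    [/\ 1 < z02 /\ z02 < z03 /\ z03 < Num.sqrt (1 + d ^+ 2),
        KH_phi N d z02 = 0 /\ KH_phi N d z03 = 0,
        (forall z : R, 1 < z -> z < Num.sqrt (1 + d ^+ 2) ->
           KH_phi N d z = 0 -> z = z02 \/ z = z03) &
        forall A : R, 0 < A ->
          ((- KH_F N d z02 < A /\ A <= - KH_F N d z03) ->
             exists s : seq R[i], [/\ size s = 4%N,
               roots_with_mult (KH_quarticC N d A) s & all is_real_c s]) /\
          ((A < - KH_F N d z02 \/ - KH_F N d z03 < A) ->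
             exists s : seq R[i], [/\ size s = 4%N,
               roots_with_mult (KH_quarticC N d A) s &
               count is_real_c s = 2%N])].
Proof.
move=> hineq.
have N1 := hN; have d1 := hd.
have dd : 0 < d^+2 by rewrite exprn_gt0.
have hN2 : 1 < N^+2 by nra.
set s := Num.sqrt (1 + d^+2).
have hs2 : s^+2 = 1 + d^+2 by rewrite /s sqr_sqrtr // addr_ge0 // sqr_ge0.
have s0 : 0 <= s by apply: sqrtr_ge0.
have s1 : 1 < s by nra.
set u := Num.sqrt (1 - 3 * N ^- 2 / 4) in hineq.
set E := (16 * N ^+ 2 / 27) * _ in hineq.
have hNi1 : N ^- 2 < 1 by rewrite invf_lt1 //; lra.
have hNi0 : 0 < N ^- 2 by rewrite invr_gt0 exprn_gt0 //; lra.
have hu2 : u^+2 = 1 - 3 * N ^- 2 / 4 by rewrite /u sqr_sqrtr //; lra.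
have u0 : 0 <= u by apply: sqrtr_ge0.
pose w := 2 * N * u.
have hw2 : w^+2 = 4 * N^+2 - 3.
  rewrite /w !exprMn hu2; field; exact: N0.
have w0 : 0 <= w by rewrite /w !mulr_ge0 //; lra.
have wN : N < w by nra.
pose zs := (2 * N + w) / 3.
have zsN : N < zs by rewrite /zs; lra.
have hE : E = 16 * N / 27 * ((4 * N^+2 - 3) * w + 8 * N^+3 - 9 * N).
  by rewrite /E /w; field.
have key : pp zs = (zs - N) * (E - d^+2) + (N / 3 + N * w^+2 / 81 + 8 * N^+2 * w / 81 - 4 * N^+3 / 9) * (w^+2 - (4 * N^+2 - 3)).
  by rewrite hE /pp /zs; field.
have ppzs : pp zs < 0.
  rewrite key hw2 subrr mulr0 addr0.
  have : 0 < zs - N by lra.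
  have : E - d^+2 < 0 by lra.
  nra.
pose PP : {poly R} := N%:P * ('X^2 - 1)^+2 - (d^+2)%:P * ('X - N%:P).
have hPP z : PP.[z] = pp z by rewrite /PP /pp !hornerE.
have ppN : 0 < pp N.
  rewrite /pp subrr mulr0 subr0; apply: mulr_gt0; [lra | apply: exprn_gt0; lra].
have pps : 0 < pp s.
  have -> : pp s = d^+2 * (N * s^+2 - s) by rewrite /pp hs2; ring.
  rewrite mulr_gt0 //; nra.
have small z : 1 < z -> pp z <= 0 -> z < s.
  move=> z1 hz.
  have t0 : 0 < z^+2 - 1 by nra.
  have h1' : z - N < N * (z^+2 - 1) by nra.
  have h2' : d^+2 * (z - N) < d^+2 * (N * (z^+2 - 1)) by rewrite ltr_pM2l.
  have Nt : 0 < N * (z^+2 - 1) by rewrite mulr_gt0 //; lra.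
  have h3 : z^+2 - 1 < d^+2.
    move: hz; rewrite /pp => hz; nra.
  nra.
have zss : zs < s by apply: small; [lra | lra].
have hdis : (PP.[N] <= 0 <= PP.[zs]) || (PP.[zs] <= 0 <= PP.[N]).
  by rewrite !hPP; apply/orP; right; rewrite !ltW.
have [z02 /andP[a1 a2] r02] := ivt_poly PP N zs (ltW zsN) hdis.
rewrite hPP in r02.
have z02N : N < z02.
  rewrite lt_neqAle a1 andbT; apply/eqP => e; move: ppN; rewrite e r02 ltxx.
  by [].
have z02zs : z02 < zs.
  rewrite lt_neqAle a2 andbT; apply/eqP => e; move: ppzs; rewrite -e r02 ltxx.
  by [].
have hdis2 : (PP.[zs] <= 0 <= PP.[s]) || (PP.[s] <= 0 <= PP.[zs]).
  by rewrite !hPP; apply/orP; left; rewrite !ltW.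
have [z03 /andP[b1 b2] r03] := ivt_poly PP zs s (ltW zss) hdis2.
rewrite hPP in r03.
have z03zs : zs < z03.
  rewrite lt_neqAle b1 andbT; apply/eqP => e; move: ppzs; rewrite e r03 ltxx.
  by [].
have z03s : z03 < s.
  rewrite lt_neqAle b2 andbT; apply/eqP => e; move: pps; rewrite -e r03 ltxx.
  by [].
have z021 : 1 < z02 by lra.
have z0203 : z02 < z03 by lra.
have z031 : 1 < z03 by lra.
have sq2 := sq1_neq _ (or_introl z021).
have sq3 := sq1_neq _ (or_introl z031).
exists z02, z03; split.
- by split; [|split]; lra.
- by rewrite !phi_pp // r02 r03 !mul0r.
- move=> z z1 zs' hphi.
  have sqz := sq1_neq _ (or_introl z1).
  have ppz : pp z = 0.
    move: hphi; rewrite phi_pp // => /eqP; rewrite mulf_eq0 invr_eq0 => /orP[/eqP //|].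
    by rewrite !mulf_eq0 (negbTE N0) (negbTE d0) (negbTE sqz).
  have [e|ne2] := eqVneq z z02; first by left.
  have [e|ne3] := eqVneq z z03; first by right.
  exfalso; apply: (pp_three z z02 z03 z1 z021 z031 ne2 _ ne3 ppz r02 r03).
  by rewrite lt_eqF.
move=> A A0; split; [apply: case1 | apply: case2] => //.
Qed.

End S.

Theorem proposition3 (R : realType) (N d : R) :
  1 < N -> 0 < d ->
  d ^+ 2 > (16 * N ^+ 2 / 27) *
           ((8 * N ^+ 2 - 6) * Num.sqrt (1 - 3 * N ^- 2 / 4) + 8 * N ^+ 2 - 9) ->
  exists z02 z03 : R,
    [/\ 1 < z02 /\ z02 < z03 /\ z03 < Num.sqrt (1 + d ^+ 2),
        KH_phi N d z02 = 0 /\ KH_phi N d z03 = 0,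
        (forall z : R, 1 < z -> z < Num.sqrt (1 + d ^+ 2) ->
           KH_phi N d z = 0 -> z = z02 \/ z = z03) &
        forall A : R, 0 < A ->
          ((- KH_F N d z02 < A /\ A <= - KH_F N d z03) ->
             exists s : seq R[i], [/\ size s = 4%N,
               roots_with_mult (KH_quarticC N d A) s & all is_real_c s]) /\
          ((A < - KH_F N d z02 \/ - KH_F N d z03 < A) ->
             exists s : seq R[i], [/\ size s = 4%N,
               roots_with_mult (KH_quarticC N d A) s &
               count is_real_c s = 2%N])].
Proof.
move=> hN hd hineq; exact: (@main R N d hN hd hineq).
Qed.
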